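(* For every positive integer $k$, $$2^k-1\le a_k\le 2^{k+n_k}-2^{\mu_2(k)}.$$
   Context: For a positive integer $k$, $a_k$ denotes the smallest positive multiple of $k$ whose sum of binary (base $2$) digits equals $k$. $n_k=\lceil\log_2 k\rceil$ and $\mu_2(k)$ is the largest $\alpha\ge0$ with $2^\alpha\mid k$. *)

(* Defs.v *)
From mathcomp Require Import all_boot.

(* Sum of the binary digits of n: bit i of n is odd (n %/ 2^i); bits at
   positions >= n are all zero since n < 2^n. *)
Definition binsum (n : nat) : nat := \sum_(i < n.+1) odd (n %/ 2 ^ i).

Definition is_ak (k a : nat) : Prop :=
  [/\ 0 < a, k %| a, binsum a = k &
      forall b, 0 < b -> k %| b -> binsum b = k -> a <= b].

Definition nk (k : nat) : nat := up_log 2 k.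

Definition mu2 (k : nat) : nat := logn 2 k.

(* Main.v *)
Require Import Defs.
From Stdlib Require Import Lia.
From mathcomp Require Import all_boot.

Definition bs (N x : nat) : nat := \sum_(i < N) odd (x %/ 2 ^ i).

Lemma bs0 x : bs 0 x = 0.
Proof. by rewrite /bs big_ord0. Qed.

Lemma bsS N x : bs N.+1 x = odd x + bs N x./2.
Proof.
rewrite /bs big_ord_recl expn0 divn1; congr (_ + _).
by apply: eq_bigr => i _; rewrite /bump /= expnS divnMA divn2.
Qed.

Lemma bs_of0 N : bs N 0 = 0.
Proof. by rewrite /bs big1 // => i _; rewrite div0n. Qed.

Lemma half_lt x k : x < 2 ^ k.+1 -> x./2 < 2 ^ k.
Proof.
move=> h; rewrite -(ltn_pmul2r (isT : 0 < 2)) (leq_ltn_trans _ (_ : x < _)) //.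
  by rewrite -[x in _ <= x]odd_double_half -muln2 leq_addl.
by rewrite -expnSr.
Qed.

Lemma bs_eq N M x : x < 2 ^ N -> x < 2 ^ M -> bs N x = bs M x.
Proof.
elim: N M x => [|N IH] [|M] x.
- by [].
- rewrite expn0 ltnS leqn0 => /eqP -> _; by rewrite bs0 bs_of0.
- rewrite expn0 ltnS leqn0 => _ /eqP ->; by rewrite bs0 bs_of0.
- move=> h1 h2; rewrite !bsS; congr (_ + _); apply: IH.
  + exact: half_lt.
  + exact: half_lt.
Qed.

Lemma binsum_bs N x : x < 2 ^ N -> binsum x = bs N x.
Proof. move=> h; rewrite /binsum -/(bs x.+1 x); apply: bs_eq => //; by rewrite (ltn_trans (ltn_expl x (isT : 1 < 2))) // ltn_exp2l. Qed.

Lemma bs_shift k N y z : z < 2 ^ k -> bs (k + N) (y * 2 ^ k + z) = bs k z + bs N y.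
Proof.
elim: k y z => [|k IH] y z.
  by rewrite expn0 ltnS leqn0 => /eqP ->; rewrite bs0 muln1 addn0.
move=> hz; rewrite addSn !bsS -addnA; congr (_ + _).
  by rewrite expnS mulnCA oddD oddM /=.
rewrite -[z in LHS]odd_double_half expnS mulnCA mul2n addnCA -doubleD half_bit_double.
apply: IH.
exact: half_lt.
Qed.

Lemma bs_compl k y : y < 2 ^ k -> bs k (2 ^ k - 1 - y) + bs k y = k.
Proof.
elim: k y => [|k IH] y.
  by rewrite expn0 ltnS leqn0 => /eqP ->; rewrite !bs0.
move=> hy.
have hh : y./2 < 2 ^ k.
  exact: half_lt.
have e : 2 ^ k.+1 - 1 - y = (~~ odd y) + (2 ^ k - 1 - y./2).*2.
  have := odd_double_half y; rewrite expnS.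
  have := hh; move: (odd y) (y./2) => [] h /ltP hh1 <-;
  rewrite -!muln2 /=; move: hh1 => /=; rewrite -?plusE -?minusE -?multE; lia.
rewrite !bsS e half_bit_double oddD odd_double addbF.
rewrite addnACA IH //.
by case: (odd y).
Qed.

Lemma bs_lower N x : 2 ^ (bs N x) <= x.+1.
Proof.
elim: N x => [|N IH] x; first by rewrite bs0.
rewrite bsS expnD.
have := IH x./2; have := odd_double_half x.
move: (2 ^ bs N x./2) (x./2) => P H.
case: (odd x) => /= hx /leP h; rewrite ?expn1 ?expn0; apply/leP;
  move: hx; rewrite -muln2 => hx; rewrite -?plusE -?minusE -?multE in h hx *; lia.
Qed.

Lemma a0_ok k : 0 < k -> binsum (k * (2 ^ k - 1)) = k.
Proof.
move=> k0.
have hk : k - 1 < 2 ^ k by rewrite (leq_ltn_trans (leq_subr 1 k)) // ltn_expl.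
have hp : 0 < 2 ^ k by rewrite expn_gt0.
have e : k * (2 ^ k - 1) = (k - 1) * 2 ^ k + (2 ^ k - 1 - (k - 1)).
  have hkP : 2 ^ k <= k * 2 ^ k by rewrite leq_pmull.
  move: hk hp k0 hkP => /ltP hk /ltP hp /ltP k0 /leP hkP.
  rewrite mulnBr muln1 mulnBl mul1n.
  move: (2 ^ k) (k * 2 ^ k) hk hp hkP => P Q hk hp hkP.
  rewrite -?plusE -?minusE -?multE in hk hp hkP *; lia.
have hlt : k * (2 ^ k - 1) < 2 ^ (k + k).
  rewrite expnD (leq_trans (_ : _ < k * 2 ^ k)) //.
    by rewrite ltn_pmul2l // ltn_subrL hp.
  by rewrite leq_mul2r (ltnW (ltn_expl k (isT : 1 < 2))) orbT.
rewrite (binsum_bs _ _ hlt) e bs_shift; first exact: bs_compl.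
by rewrite (leq_ltn_trans (leq_subr _ _)) // ltn_subrL hp.
Qed.

Theorem mainTheorem3 (k : nat) : 0 < k ->
  (exists a, is_ak k a) /\
  (forall a, is_ak k a -> 2 ^ k - 1 <= a <= 2 ^ (k + nk k) - 2 ^ mu2 k).
Proof.
move=> k0.
have a0pos : 0 < k * (2 ^ k - 1).
  by rewrite muln_gt0 k0 subn_gt0 -{1}(expn0 2) ltn_exp2l.
pose P b := [&& 0 < b, k %| b & binsum b == k].
have ex : exists b, P b.
  by exists (k * (2 ^ k - 1)); rewrite /P dvdn_mulr // a0_ok // eqxx a0pos.
split.
  case: (ex_minnP ex) => a /and3P [a1 a2 /eqP a3] amin.
  exists a; split => // b b1 b2 b3; apply: amin; by rewrite /P b1 b2 b3 eqxx.
move=> a [a1 a2 a3 amin]; apply/andP; split.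
  have h : 2 ^ binsum a <= a.+1 := bs_lower a.+1 a; rewrite a3 in h.
  by rewrite -ltnS subn1 prednK ?expn_gt0.
have hb := amin (k * (2 ^ k - 1)) a0pos (dvdn_mulr _ (dvdnn k)) (a0_ok _ k0).
apply: (leq_trans hb).
have h1 : k <= 2 ^ nk k by apply: up_logP.
have h2 : 2 ^ mu2 k <= k by apply: dvdn_leq => //; apply: pfactor_dvdnn.
have h3 : k * 2 ^ k <= 2 ^ (k + nk k) by rewrite expnD mulnC leq_mul2l h1 orbT.
rewrite mulnBr muln1.
move: h2 h3 => /leP h2 /leP h3; apply/leP; rewrite -?minusE. lia.
Qed.
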